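(* Let $n \ge 1$, let $F$ be an $n$-perturbation on $H^2(\mathbb{D})$ and $S_n = M_z + F$. If $\mathcal{M} \subseteq H^2(\mathbb{D})$ is a nonzero closed subspace with $S_n\mathcal{M}\subseteq\mathcal{M}$, then $\dim(\mathcal{M} \ominus S_n \mathcal{M}) = 1$.
   Context: $H^2(\mathbb{D})$ is the Hardy space on the open unit disc and $M_z$ the unilateral shift on it. All operators are bounded. A linear operator $F$ on $H^2(\mathbb{D})$ is an $n$-perturbation if (a) $Fz^m = 0$ for all $m \ge n$; (b) $F(z^m H^2(\mathbb{D})) \subseteq z^{m+1}\mathbb{C}[z]$ for all $m \ge 0$; and (c) $M_z + F$ is left-invertible. *)

(* Defs.v *)
(* H^2(D) is modelled, via the unitary
   Taylor-coefficient map f = sum a_k z^k  |->  (a_k)_k, as l^2(N) over C. *)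
From Stdlib Require Import Reals.
From Coquelicot Require Import Coquelicot.
Open Scope R_scope.

Definition seqC := nat -> C.

Definition zeroC : seqC := fun _ => RtoC 0.

Definition inH2 (a : seqC) : Prop := ex_series (fun k => (Cmod (a k)) ^ 2).

Definition h2norm (a : seqC) : R := sqrt (Series (fun k => (Cmod (a k)) ^ 2)).

Definition addS (a b : seqC) : seqC := fun k => Cplus (a k) (b k).
Definition subS (a b : seqC) : seqC := fun k => Cminus (a k) (b k).
Definition scaleS (c : C) (a : seqC) : seqC := fun k => Cmult c (a k).

Definition orth (a b : seqC) : Prop :=
  Series (fun k => Re (Cmult (a k) (Cconj (b k)))) = 0 /\
  Series (fun k => Im (Cmult (a k) (Cconj (b k)))) = 0.

Definition zpow (m : nat) : seqC := fun k => if Nat.eqb k m then RtoC 1 else RtoC 0.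

Definition Mz (a : seqC) : seqC :=
  fun k => match k with O => RtoC 0 | S k' => a k' end.

(* bounded linear operator on H^2 (values outside H^2 are irrelevant) *)
Definition bounded_op (T : seqC -> seqC) : Prop :=
  (forall a, inH2 a -> inH2 (T a)) /\
  (forall a b, inH2 a -> inH2 b -> T (addS a b) = addS (T a) (T b)) /\
  (forall c a, inH2 a -> T (scaleS c a) = scaleS c (T a)) /\
  (exists K, 0 <= K /\ forall a, inH2 a -> h2norm (T a) <= K * h2norm a).

Definition opadd (T U : seqC -> seqC) : seqC -> seqC := fun a => addS (T a) (U a).

Definition left_invertible (T : seqC -> seqC) : Prop :=
  exists L, bounded_op L /\ forall a, inH2 a -> L (T a) = a.

Definition in_zmH2 (m : nat) (a : seqC) : Prop :=
  inH2 a /\ forall k, (k < m)%nat -> a k = RtoC 0.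

Definition in_zm1poly (m : nat) (a : seqC) : Prop :=
  (forall k, (k <= m)%nat -> a k = RtoC 0) /\
  exists N, forall k, (N <= k)%nat -> a k = RtoC 0.

Definition n_perturbation (n : nat) (F : seqC -> seqC) : Prop :=
  bounded_op F /\
  (forall m, (n <= m)%nat -> F (zpow m) = zeroC) /\
  (forall m a, in_zmH2 m a -> in_zm1poly m (F a)) /\
  left_invertible (opadd Mz F).

Definition closed_subspace (M : seqC -> Prop) : Prop :=
  (forall a, M a -> inH2 a) /\
  M zeroC /\
  (forall a b, M a -> M b -> M (addS a b)) /\
  (forall c a, M a -> M (scaleS c a)) /\
  (forall (u : nat -> seqC) a, (forall j, M (u j)) -> inH2 a ->
     is_lim_seq (fun j => h2norm (subS (u j) a)) 0 -> M a).

(* M ⊖ T M = M ∩ (T M)^⊥ *)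
Definition wandering (T : seqC -> seqC) (M : seqC -> Prop) (u : seqC) : Prop :=
  M u /\ forall w, M w -> orth u (T w).

Definition dim_one (W : seqC -> Prop) : Prop :=
  exists v, W v /\ v <> zeroC /\ forall u, W u -> exists c : C, u = scaleS c v.

(* Main.v *)
Require Import Defs.
From Stdlib Require Import Reals Lra Lia FunctionalExtensionality ClassicalEpsilon Classical List.
From Coquelicot Require Import Coquelicot.
Import ListNotations.
Open Scope R_scope.


Fixpoint fsum (f : nat -> R) (N : nat) : R :=
  match N with O => 0 | S N' => fsum f N' + f N' end.

Lemma fsum_sumf f N : fsum f (S N) = sum_f_R0 f N.
Proof. induction N; simpl in *; [lra|]. rewrite <- IHN. simpl. lra. Qed.

Lemma fsum_sum_n f N : fsum f (S N) = sum_n f N.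
Proof. rewrite sum_n_Reals. apply fsum_sumf. Qed.

Lemma fsum_ext f g N : (forall k, (k < N)%nat -> f k = g k) -> fsum f N = fsum g N.
Proof. induction N; intros H; simpl; [lra|]. rewrite IHN, H; auto; lra. Qed.

Lemma fsum_nonneg f N : (forall k, 0 <= f k) -> 0 <= fsum f N.
Proof. intros H; induction N; simpl; [lra|]. specialize (H N). lra. Qed.

Lemma fsum_mono f N N' : (forall k, 0 <= f k) -> (N <= N')%nat -> fsum f N <= fsum f N'.
Proof. intros H Hle; induction Hle; simpl; [lra|]. specialize (H m). lra. Qed.

Lemma fsum_plus f g N : fsum (fun k => f k + g k) N = fsum f N + fsum g N.
Proof. induction N; simpl; lra. Qed.

Lemma fsum_scal c f N : fsum (fun k => c * f k) N = c * fsum f N.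
Proof. induction N; simpl; [lra|]. rewrite IHN; ring. Qed.

Lemma fsum_le f g N : (forall k, f k <= g k) -> fsum f N <= fsum g N.
Proof. intros H; induction N; simpl; [lra|]. specialize (H N). lra. Qed.

Lemma fsum_shift f N : fsum f (S N) = f O + fsum (fun k => f (S k)) N.
Proof. induction N; simpl in *; [lra|]. rewrite IHN. lra. Qed.

Lemma fsum_lim f : ex_series f -> is_lim_seq (fsum f) (Series f).
Proof.
  intros H. apply Series_correct in H.
  apply is_lim_seq_incr_1. eapply is_lim_seq_ext.
  { intros N. symmetry. apply fsum_sum_n. }
  exact H.
Qed.

Lemma Series_zero_fun : Series (fun _ => 0) = 0.
Proof.
  rewrite (Series_ext _ (fun n => 0 * 0)) by (intros; ring).
  rewrite Series_scal_l. ring.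
Qed.

Lemma finsupp_is_series f T : (forall k, (T <= k)%nat -> f k = 0) -> is_series f (fsum f T).
Proof.
  intros H. apply is_series_Reals. intros eps Heps.
  exists T. intros m Hm. unfold R_dist.
  assert (E : sum_f_R0 f m = fsum f T).
  { rewrite <- fsum_sumf. assert (Hm' : (T <= S m)%nat) by lia.
    induction Hm'. reflexivity. simpl. rewrite H by lia. lra. }
  rewrite E. rewrite Rminus_diag, Rabs_R0. exact Heps.
Qed.

Lemma finsupp_ex f T : (forall k, (T <= k)%nat -> f k = 0) -> ex_series f.
Proof. intros H. eexists. apply finsupp_is_series with (T:=T); auto. Qed.

Lemma finsupp_Series f T : (forall k, (T <= k)%nat -> f k = 0) -> Series f = fsum f T.
Proof. intros H. apply is_series_unique. apply finsupp_is_series; auto. Qed.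

Lemma Series_nonneg f : ex_series f -> (forall k, 0 <= f k) -> 0 <= Series f.
Proof.
  intros He H. rewrite <- Series_zero_fun. apply Series_le; auto. intros; split; [lra|auto].
Qed.

Lemma fsum_le_Series f N : ex_series f -> (forall k, 0 <= f k) -> fsum f N <= Series f.
Proof.
  intros He H. destruct N. simpl. apply Series_nonneg; auto.
  rewrite (Series_incr_n f (S N)) by (auto; lia). rewrite fsum_sumf. simpl.
  assert (0 <= Series (fun k => f (S (N + k)))).
  { apply Series_nonneg; auto. apply (ex_series_incr_n f (S N)) in He. exact He. }
  lra.
Qed.

Lemma ex_series_bounded f B : (forall k, 0 <= f k) -> (forall N, fsum f N <= B) ->
  ex_series f /\ Series f <= B.
Proof.
  intros Hp HB.
  destruct (growing_cv (sum_f_R0 f)) as [l Hl].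
  { intros N. simpl. specialize (Hp (S N)). lra. }
  { exists B. intros x [N ->]. rewrite <- fsum_sumf. apply HB. }
  assert (Hs : is_series f l) by (apply is_series_Reals; exact Hl).
  split. eexists; eauto.
  rewrite (is_series_unique _ _ Hs).
  destruct (Rle_dec l B) as [|Hn]; auto. exfalso.
  destruct (Hl (l - B)) as [N HN]. lra.
  specialize (HN N (le_n N)). specialize (HB (S N)). rewrite fsum_sumf in HB.
  unfold R_dist in HN. apply Rabs_def2 in HN. lra.
Qed.

Lemma Series_zero_terms f : ex_series f -> (forall k, 0 <= f k) -> Series f <= 0 -> forall k, f k = 0.
Proof.
  intros He Hp H0 k. pose proof (fsum_le_Series f (S k) He Hp). simpl in H.
  pose proof (fsum_nonneg f k Hp). specialize (Hp k). lra.
Qed.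

Lemma ex_series_dom f g : (forall k, 0 <= f k <= g k) -> ex_series g -> ex_series f.
Proof.
  intros H Hg. apply (ex_series_le f g); auto. intros k. 
  change (norm (f k)) with (Rabs (f k)). rewrite Rabs_pos_eq; apply H.
Qed.

Lemma ex_series_lin f g a b : ex_series f -> ex_series g -> ex_series (fun k => a * f k + b * g k).
Proof.
  intros Hf Hg. apply (ex_series_scal_l a) in Hf. apply (ex_series_scal_l b) in Hg.
  pose proof (ex_series_plus _ _ Hf Hg). eapply ex_series_ext; [|exact H]. intros; reflexivity.
Qed.

Lemma Series_lin f g a b : ex_series f -> ex_series g ->
  Series (fun k => a * f k + b * g k) = a * Series f + b * Series g.
Proof.
  intros Hf Hg. rewrite Series_plus. rewrite !Series_scal_l. auto.
  apply (ex_series_scal_l a) in Hf. eapply ex_series_ext; [|exact Hf]. intros; reflexivity.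
  apply (ex_series_scal_l b) in Hg. eapply ex_series_ext; [|exact Hg]. intros; reflexivity.
Qed.


Definition sqc (z : C) : R := fst z * fst z + snd z * snd z.
Definition sq (a : seqC) (k : nat) : R := sqc (a k).
Definition pr (a b : seqC) (k : nat) : R := fst (a k) * fst (b k) + snd (a k) * snd (b k).
Definition H2 (a : seqC) : Prop := ex_series (sq a).
Definition rip (a b : seqC) : R := Series (pr a b).
Definition nsq (a : seqC) : R := Series (sq a).
Definition iS (a : seqC) : seqC := scaleS (0%R, 1%R) a.
Definition Bk (a : seqC) : seqC := fun k => a (S k).

Lemma sqc_nonneg z : 0 <= sqc z.
Proof. unfold sqc. nra. Qed.
Lemma sq_nonneg a k : 0 <= sq a k.
Proof. apply sqc_nonneg. Qed.

Lemma sqc_zero z : sqc z = 0 -> z = RtoC 0.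
Proof. unfold sqc, RtoC. destruct z as [x y]; simpl. intros H.
  assert (x = 0) by nra. assert (y = 0) by nra. subst; auto. Qed.

Lemma Cmod2 z : Cmod z ^ 2 = sqc z.
Proof. unfold Cmod, sqc. rewrite pow2_sqrt. ring. nra. Qed.

Lemma inH2_iff a : inH2 a <-> H2 a.
Proof. unfold inH2, H2. split; apply ex_series_ext; intros; unfold sq; rewrite Cmod2; auto. Qed.

Lemma h2norm_nsq a : h2norm a = sqrt (nsq a).
Proof. unfold h2norm, nsq. f_equal. apply Series_ext. intros; unfold sq; apply Cmod2. Qed.

Lemma nsq_nonneg a : H2 a -> 0 <= nsq a.
Proof. intros H. apply Series_nonneg; auto. apply sq_nonneg. Qed.

Lemma nsq_zero a : H2 a -> nsq a <= 0 -> a = zeroC.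
Proof. intros H H0. apply functional_extensionality; intros k.
  apply sqc_zero. apply (Series_zero_terms (sq a)); auto. apply sq_nonneg. Qed.

Lemma coord_le a k : H2 a -> sq a k <= nsq a.
Proof. intros H. pose proof (fsum_le_Series (sq a) (S k) H (sq_nonneg a)). simpl in H0.
  pose proof (fsum_nonneg (sq a) k (sq_nonneg a)). unfold nsq. lra. Qed.

Lemma pr_bound a b k : Rabs (pr a b k) <= (sq a k + sq b k) / 2.
Proof. unfold pr, sq, sqc. apply Rabs_le.
  pose proof (pow2_ge_0 (fst (a k) - fst (b k))). pose proof (pow2_ge_0 (snd (a k) - snd (b k))).
  pose proof (pow2_ge_0 (fst (a k) + fst (b k))). pose proof (pow2_ge_0 (snd (a k) + snd (b k))).
  split; nra. Qed.

Lemma ex_pr a b : H2 a -> H2 b -> ex_series (pr a b).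
Proof.
  intros Ha Hb. apply (@ex_series_le R_AbsRing R_CompleteNormedModule (pr a b) (fun k => /2 * sq a k + /2 * sq b k)).
  intros k. change (norm (pr a b k)) with (Rabs (pr a b k)). pose proof (pr_bound a b k). lra.
  apply ex_series_lin; auto.
Qed.

Ltac cunf := unfold sq, pr, sqc, addS, subS, scaleS, iS, Bk, Mz, zeroC, Cminus, Cplus, Copp, Cmult, RtoC in *; simpl in *.

Lemma H2_ext a b : (forall k, sq a k = sq b k) -> H2 a -> H2 b.
Proof. intros H. apply ex_series_ext; auto. Qed.

Lemma H2_zero : H2 zeroC.
Proof. apply (finsupp_ex _ 0). intros; cunf; ring. Qed.

Lemma H2_add a b : H2 a -> H2 b -> H2 (addS a b).
Proof. intros Ha Hb. apply (ex_series_dom _ (fun k => 2 * sq a k + 2 * sq b k)).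
  intros k; split. apply sq_nonneg. cunf.
  pose proof (pow2_ge_0 (fst (a k) - fst (b k))). pose proof (pow2_ge_0 (snd (a k) - snd (b k))). nra. apply ex_series_lin; auto. Qed.

Lemma H2_scale c a : H2 a -> H2 (scaleS c a).
Proof. intros Ha. apply (ex_series_ext (fun k => sqc c * sq a k + 0 * sq a k)).
  intros k; cunf; ring. apply ex_series_lin; auto. Qed.

Lemma H2_sub a b : H2 a -> H2 b -> H2 (subS a b).
Proof. intros Ha Hb. apply (ex_series_dom _ (fun k => 2 * sq a k + 2 * sq b k)).
  intros k; split. apply sq_nonneg. cunf.
  pose proof (pow2_ge_0 (fst (a k) + fst (b k))). pose proof (pow2_ge_0 (snd (a k) + snd (b k))). nra. apply ex_series_lin; auto. Qed.

Lemma H2_iS a : H2 a -> H2 (iS a).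
Proof. apply H2_scale. Qed.

Lemma H2_Mz a : H2 a -> H2 (Mz a).
Proof. intros Ha. unfold H2. apply ex_series_incr_1. simpl. exact Ha. Qed.

Lemma H2_Bk a : H2 a -> H2 (Bk a).
Proof. intros Ha. unfold H2. apply ex_series_incr_1 in Ha. exact Ha. Qed.

Lemma H2_zpow m : H2 (zpow m).
Proof. apply (finsupp_ex _ (S m)). intros k Hk. unfold sq, zpow.
  destruct (Nat.eqb_spec k m). lia. cunf; ring. Qed.

Lemma rip_ext a b a' b' : (forall k, pr a b k = pr a' b' k) -> rip a b = rip a' b'.
Proof. intros; apply Series_ext; auto. Qed.
Lemma nsq_ext a b : (forall k, sq a k = sq b k) -> nsq a = nsq b.
Proof. intros; apply Series_ext; auto. Qed.

Lemma rip_self a : rip a a = nsq a.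
Proof. apply Series_ext. intros; cunf; ring. Qed.
Lemma rip_sym a b : rip a b = rip b a.
Proof. apply Series_ext. intros; cunf; ring. Qed.

Lemma rip_add_l a b c : H2 a -> H2 b -> H2 c -> rip (addS a b) c = rip a c + rip b c.
Proof. intros. unfold rip. rewrite (Series_ext _ (fun k => 1 * pr a c k + 1 * pr b c k)).
  rewrite Series_lin by (apply ex_pr; auto). ring. intros; cunf; ring. Qed.

Lemma rip_sub_l a b c : H2 a -> H2 b -> H2 c -> rip (subS a b) c = rip a c - rip b c.
Proof. intros. unfold rip. rewrite (Series_ext _ (fun k => 1 * pr a c k + (-1) * pr b c k)).
  rewrite Series_lin by (apply ex_pr; auto). ring. intros; cunf; ring. Qed.

Lemma rip_scale_l z a b : H2 a -> H2 b -> rip (scaleS z a) b = fst z * rip a b + snd z * rip (iS a) b.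
Proof. intros. unfold rip. rewrite (Series_ext _ (fun k => fst z * pr a b k + snd z * pr (iS a) b k)).
  rewrite Series_lin by (try apply ex_pr; auto using H2_iS). ring. intros; cunf; ring. Qed.

Lemma rip_real_l t a b : H2 a -> H2 b -> rip (scaleS (RtoC t) a) b = t * rip a b.
Proof. intros. rewrite rip_scale_l; auto. unfold RtoC; simpl. ring. Qed.

Lemma rip_iS a b : rip (iS a) b = - rip a (iS b).
Proof. unfold rip. rewrite <- Series_opp. apply Series_ext; intros; cunf; ring. Qed.

Lemma rip_iS_self a : rip a (iS a) = 0.
Proof. unfold rip. rewrite <- Series_zero_fun. apply Series_ext; intros; cunf; ring. Qed.

Lemma nsq_iS a : nsq (iS a) = nsq a.
Proof. apply nsq_ext; intros; cunf; ring. Qed.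

Lemma rip_zero_r a : rip a zeroC = 0.
Proof. unfold rip. rewrite <- Series_zero_fun. apply Series_ext; intros; cunf; ring. Qed.

Lemma Series_lin3 f g h a b c : ex_series f -> ex_series g -> ex_series h ->
  Series (fun k => a * f k + b * g k + c * h k) = a * Series f + b * Series g + c * Series h.
Proof. intros. rewrite (Series_ext _ (fun k => 1 * (a * f k + b * g k) + c * h k)) by (intros; ring).
  rewrite Series_lin; auto. rewrite Series_lin; auto. ring. apply ex_series_lin; auto. Qed.

Lemma nsq_add a b : H2 a -> H2 b -> nsq (addS a b) = nsq a + 2 * rip a b + nsq b.
Proof. intros Ha Hb. unfold nsq, rip.
  rewrite (Series_ext _ (fun k => 1 * sq a k + 2 * pr a b k + 1 * sq b k)).
  rewrite Series_lin3; auto. ring. apply ex_pr; auto.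
  intros; cunf; ring. Qed.

Lemma nsq_sub a b : H2 a -> H2 b -> nsq (subS a b) = nsq a - 2 * rip a b + nsq b.
Proof. intros Ha Hb. unfold nsq, rip.
  rewrite (Series_ext _ (fun k => 1 * sq a k + (-2) * pr a b k + 1 * sq b k)).
  rewrite Series_lin3; auto. ring. apply ex_pr; auto.
  intros; cunf; ring. Qed.

Lemma nsq_real t a : H2 a -> nsq (scaleS (RtoC t) a) = t * t * nsq a.
Proof. intros. unfold nsq. rewrite <- Series_scal_l. apply Series_ext; intros; cunf; ring. Qed.

Lemma nsq_sub_sym a b : nsq (subS a b) = nsq (subS b a).
Proof. apply nsq_ext; intros; cunf; ring. Qed.

Lemma quad_nonneg A B C : 0 <= C -> (forall t, 0 <= A - 2 * t * B + t * t * C) -> B * B <= A * C.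
Proof.
  intros HC0 H. pose proof (H 0) as H0.
  destruct (Req_dec C 0) as [HC|HC].
  - subst. destruct (Req_dec B 0). subst; lra.
    specialize (H ((A + 1) / (2 * B))).
    replace (A - 2 * ((A + 1) / (2 * B)) * B + (A + 1) / (2 * B) * ((A + 1) / (2 * B)) * 0) with (-1) in H by (field; auto). lra.
  - specialize (H (B / C)).
    replace (A - 2 * (B / C) * B + B / C * (B / C) * C) with (A - B * B / C) in H by (field; lra).
    assert (0 < C) by lra.
    assert (HH : B * B / C <= A) by lra. apply Rle_div_l in HH; auto.
Qed.

Lemma CS a b : H2 a -> H2 b -> rip a b * rip a b <= nsq a * nsq b.
Proof. intros Ha Hb. apply quad_nonneg. apply nsq_nonneg; auto. intros t.
  pose proof (nsq_nonneg _ (H2_sub a (scaleS (RtoC t) b) Ha (H2_scale _ _ Hb))).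
  rewrite nsq_sub in H; auto using H2_scale. rewrite nsq_real in H; auto.
  rewrite (rip_sym a), rip_real_l, rip_sym in H; auto. lra. Qed.

Lemma CS_abs a b : H2 a -> H2 b -> Rabs (rip a b) <= sqrt (nsq a) * sqrt (nsq b).
Proof. intros Ha Hb. rewrite <- sqrt_mult by (apply nsq_nonneg; auto).
  rewrite <- sqrt_Rsqr_abs. apply sqrt_le_1_alt. unfold Rsqr. apply CS; auto. Qed.



Definition conv (u : nat -> seqC) (a : seqC) : Prop :=
  is_lim_seq (fun j => nsq (subS (u j) a)) 0.

Lemma lim_sqrt0 (v : nat -> R) : is_lim_seq v 0 -> is_lim_seq (fun j => sqrt (v j)) 0.
Proof. intros H. rewrite <- sqrt_0. apply is_lim_seq_continuous; auto.
  apply continuity_pt_sqrt. lra. Qed.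

Lemma conv_h2norm u a : conv u a -> is_lim_seq (fun j => h2norm (subS (u j) a)) 0.
Proof. intros H. eapply is_lim_seq_ext. intros; symmetry; apply h2norm_nsq.
  apply lim_sqrt0. exact H. Qed.

Lemma h2norm_conv u a : (forall j, H2 (subS (u j) a)) -> is_lim_seq (fun j => h2norm (subS (u j) a)) 0 -> conv u a.
Proof. intros Hh H. unfold conv.
  pose proof (is_lim_seq_mult' _ _ _ _ H H). rewrite Rmult_0_l in H0.
  eapply is_lim_seq_ext; [|exact H0]. intros j. simpl. rewrite h2norm_nsq.
  rewrite <- Rsqr_def, Rsqr_sqrt; auto. apply nsq_nonneg; auto. Qed.

Lemma lim_inv_S : is_lim_seq (fun j => / INR (S j)) 0.
Proof.
  assert (H : is_lim_seq (fun j => INR (S j)) p_infty).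
  { apply (is_lim_seq_incr_1 INR). apply is_lim_seq_INR. }
  pose proof (is_lim_seq_inv _ _ H). simpl in H0. apply H0. discriminate.
Qed.

Lemma inv_S_pos j : 0 < / INR (S j).
Proof. apply Rinv_0_lt_compat. apply lt_0_INR. lia. Qed.

Lemma lim_le_const (f : nat -> R) (L c : R) : (forall j, c <= f j) -> is_lim_seq f L -> c <= L.
Proof. intros H Hl. pose proof (is_lim_seq_le (fun _ => c) f c L H (is_lim_seq_const c) Hl). simpl in H0. exact H0. Qed.

Lemma lim_le_const' (f : nat -> R) (L c : R) : (forall j, f j <= c) -> is_lim_seq f L -> L <= c.
Proof. intros H Hl. pose proof (is_lim_seq_le f (fun _ => c) L c H Hl (is_lim_seq_const c)). simpl in H0. exact H0. Qed.

Lemma abs_le_sq r d : 0 <= d -> r * r <= d * d -> Rabs r <= d.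
Proof. intros Hd H. rewrite <- (Rabs_pos_eq d) by auto. apply Rsqr_le_abs_0. unfold Rsqr; auto. Qed.

Lemma lim_fsum (v : nat -> nat -> R) (w : nat -> R) N :
  (forall k, is_lim_seq (fun l => v l k) (w k)) -> is_lim_seq (fun l => fsum (v l) N) (fsum w N).
Proof. intros H. induction N; simpl. apply is_lim_seq_const.
  apply is_lim_seq_plus'; auto. Qed.

Lemma lim_sqc_diff (x : C) (y : nat -> C) (yl : C) :
  is_lim_seq (fun l => fst (y l)) (fst yl) -> is_lim_seq (fun l => snd (y l)) (snd yl) ->
  is_lim_seq (fun l => sqc (Cminus x (y l))) (sqc (Cminus x yl)).
Proof. intros H1 H2.
  assert (G1 : is_lim_seq (fun l => fst x - fst (y l)) (fst x - fst yl)) by (apply is_lim_seq_minus'; auto; apply is_lim_seq_const).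
  assert (G2 : is_lim_seq (fun l => snd x - snd (y l)) (snd x - snd yl)) by (apply is_lim_seq_minus'; auto; apply is_lim_seq_const).
  pose proof (is_lim_seq_plus' _ _ _ _ (is_lim_seq_mult' _ _ _ _ G1 G1) (is_lim_seq_mult' _ _ _ _ G2 G2)).
  eapply is_lim_seq_ext; [|replace (sqc (Cminus x yl)) with ((fst x - fst yl) * (fst x - fst yl) + (snd x - snd yl) * (snd x - snd yl)); [exact H|]].
  intros; unfold sqc, Cminus, Cplus, Copp; simpl; ring. unfold sqc, Cminus, Cplus, Copp; simpl; ring. Qed.

Lemma complete (u : nat -> seqC) : (forall j, H2 (u j)) ->
  (forall eps, 0 < eps -> exists J, forall j k, (J <= j)%nat -> (J <= k)%nat -> nsq (subS (u j) (u k)) <= eps) ->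
  exists a, H2 a /\ conv u a.
Proof.
  intros Hu Hc.
  assert (Hcoord : forall k, ex_lim_seq_cauchy (fun j => fst (u j k)) /\ ex_lim_seq_cauchy (fun j => snd (u j k))).
  { intros k. split; intros [eps Heps]; simpl;
    (assert (He2 : 0 < (eps/2)*(eps/2)) by (apply Rmult_lt_0_compat; lra); destruct (Hc _ He2) as [J HJ]); exists J; intros j l Hj Hl;
    specialize (HJ j l Hj Hl); pose proof (coord_le (subS (u j) (u l)) k (H2_sub _ _ (Hu j) (Hu l))) as Hco;
    pose proof (sq_nonneg (u j) k);
    assert (Hb : Rabs (fst (u j k) - fst (u l k)) <= eps/2 /\ Rabs (snd (u j k) - snd (u l k)) <= eps/2)
      by (split; apply abs_le_sq; try lra;
          pose proof (pow2_ge_0 (fst (u j k) - fst (u l k))); pose proof (pow2_ge_0 (snd (u j k) - snd (u l k)));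
          assert (Hsq : sq (subS (u j) (u l)) k = (fst (u j k) - fst (u l k)) * (fst (u j k) - fst (u l k)) + (snd (u j k) - snd (u l k)) * (snd (u j k) - snd (u l k))) by (unfold sq, sqc, subS, Cminus, Cplus, Copp; simpl; ring);
          rewrite Hsq in Hco; nra);
    lra. }
  set (a := fun k => (real (Lim_seq (fun j => fst (u j k))), real (Lim_seq (fun j => snd (u j k)))) : C).
  assert (Ha1 : forall k, is_lim_seq (fun j => fst (u j k)) (fst (a k))).
  { intros k. apply Lim_seq_correct'. apply ex_lim_seq_cauchy_corr. apply Hcoord. }
  assert (Ha2 : forall k, is_lim_seq (fun j => snd (u j k)) (snd (a k))).
  { intros k. apply Lim_seq_correct'. apply ex_lim_seq_cauchy_corr. apply Hcoord. }
  assert (Key : forall eps, 0 < eps -> exists J, forall j, (J <= j)%nat -> H2 (subS (u j) a) /\ nsq (subS (u j) a) <= eps).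
  { intros eps Heps. destruct (Hc eps Heps) as [J HJ]. exists J. intros j Hj.
    apply ex_series_bounded. apply sq_nonneg. intros N.
    assert (Hl : is_lim_seq (fun l => fsum (sq (subS (u j) (u (l + J)%nat))) N) (fsum (sq (subS (u j) a)) N)).
    { apply (lim_fsum (fun l => sq (subS (u j) (u (l + J)%nat)))). intros k. unfold sq, subS.
      apply lim_sqc_diff.
      specialize (Ha1 k). apply (is_lim_seq_incr_n _ J) in Ha1. exact Ha1.
      specialize (Ha2 k). apply (is_lim_seq_incr_n _ J) in Ha2. exact Ha2. }
    apply (lim_le_const' _ _ eps) in Hl; auto. intros l.
    eapply Rle_trans. apply fsum_le_Series. apply H2_sub; auto. apply sq_nonneg.
    apply HJ; lia. }
  destruct (Key 1 Rlt_0_1) as [J1 HJ1]. destruct (HJ1 J1 (le_n _)) as [Hh _].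
  exists a. split.
  - apply (H2_ext (subS (u J1) (subS (u J1) a))). intros; cunf; ring. apply H2_sub; auto.
  - unfold conv. apply is_lim_seq_Reals. intros eps Heps.
    destruct (Key (eps/2)) as [J HJ]. lra. exists J. intros j Hj. destruct (HJ j Hj) as [H1 H2'].
    unfold R_dist. pose proof (nsq_nonneg _ H1). rewrite Rminus_0_r, Rabs_pos_eq; lra.
Qed.

Definition rcs (N : seqC -> Prop) : Prop :=
  (forall a, N a -> H2 a) /\ N zeroC /\ (forall a b, N a -> N b -> N (addS a b)) /\
  (forall t a, N a -> N (scaleS (RtoC t) a)) /\
  (forall u a, (forall j, N (u j)) -> H2 a -> conv u a -> N a).

Lemma parallelogram a b : H2 a -> H2 b -> nsq (subS a b) + nsq (addS a b) = 2 * nsq a + 2 * nsq b.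
Proof. intros. rewrite nsq_sub, nsq_add; auto. ring. Qed.

Lemma projection N x : rcs N -> H2 x -> exists p, N p /\ forall y, N y -> rip (subS x p) y = 0.
Proof.
  intros [NH [N0 [Nadd [Nsc Ncl]]]] Hx.
  set (E := fun r => exists y, N y /\ r = - nsq (subS x y)).
  destruct (completeness E) as [m [Hub Hlub]].
  { exists 0. intros r [y [Hy ->]]. pose proof (nsq_nonneg _ (H2_sub _ _ Hx (NH _ Hy))). lra. }
  { exists (- nsq (subS x zeroC)). exists zeroC; auto. }
  set (d := - m).
  assert (Hd1 : forall y, N y -> d <= nsq (subS x y)).
  { intros y Hy. assert (E (- nsq (subS x y))) by (exists y; auto). apply Hub in H. unfold d. lra. }
  assert (Hd2 : forall eps, 0 < eps -> exists y, N y /\ nsq (subS x y) < d + eps).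
  { intros eps Heps. destruct (classic (exists y, N y /\ nsq (subS x y) < d + eps)) as [|Hn]; auto.
    exfalso. assert (is_upper_bound E (- d - eps)).
    { intros r [y [Hy ->]]. destruct (Rlt_dec (nsq (subS x y)) (d + eps)).
      exfalso; apply Hn; exists y; auto. lra. }
    apply Hlub in H. unfold d in H. lra. }
  assert (Hseq : forall j : nat, exists y, N y /\ nsq (subS x y) < d + / INR (S j)).
  { intros j. apply Hd2. apply inv_S_pos. }
  set (ys := fun j => proj1_sig (constructive_indefinite_description _ (Hseq j))).
  assert (Hys : forall j, N (ys j) /\ nsq (subS x (ys j)) < d + / INR (S j)).
  { intros j. unfold ys. destruct (constructive_indefinite_description _ (Hseq j)). simpl. auto. }
  assert (Hc : forall j k, nsq (subS (ys j) (ys k)) <= 2 * / INR (S j) + 2 * / INR (S k)).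
  { intros j k. destruct (Hys j) as [Nj Dj]. destruct (Hys k) as [Nk Dk].
    set (mid := scaleS (RtoC (/2)) (addS (ys j) (ys k))).
    assert (Nm : N mid) by (apply Nsc, Nadd; auto).
    pose proof (Hd1 _ Nm).
    pose proof (parallelogram (subS x (ys k)) (subS x (ys j)) (H2_sub _ _ Hx (NH _ Nk)) (H2_sub _ _ Hx (NH _ Nj))).
    rewrite (nsq_ext (subS (subS x (ys k)) (subS x (ys j))) (subS (ys j) (ys k))) in H0 by (intros; cunf; ring).
    rewrite (nsq_ext (addS (subS x (ys k)) (subS x (ys j))) (scaleS (RtoC 2) (subS x mid))) in H0
      by (intros; unfold mid; cunf; field).
    rewrite nsq_real in H0. lra. apply H2_sub; auto. }
  destruct (complete ys) as [p [Hp Hconv]].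
  { intros j. apply NH, Hys. }
  { intros eps Heps. pose proof lim_inv_S as Hl. apply is_lim_seq_Reals in Hl.
    destruct (Hl (eps/4)) as [J HJ]. lra. exists J. intros j k Hj Hk.
    pose proof (HJ j Hj). pose proof (HJ k Hk). unfold R_dist in *. rewrite Rminus_0_r in *.
    rewrite Rabs_pos_eq in * by (left; apply inv_S_pos). pose proof (Hc j k). lra. }
  assert (Np : N p). { apply (Ncl ys); auto. intros j; apply Hys. }
  exists p. split; auto. intros y Hy.
  pose proof (NH _ Hy) as Hy2.
  set (c := rip (subS x p) y). set (Y := nsq y).
  assert (HY : 0 <= Y) by (apply nsq_nonneg; auto).
  assert (Hineq : forall t, 2 * t * c <= t * t * Y).
  { intros t.
    apply (lim_le_const (fun j => t * t * Y + / INR (S j) + 2 * Rabs t * (sqrt (nsq (subS (ys j) p)) * sqrt Y))).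
    - intros j. destruct (Hys j) as [Nj Dj]. pose proof (NH _ Nj) as Hj2.
      assert (Nz : N (addS (ys j) (scaleS (RtoC t) y))) by (apply Nadd; auto).
      pose proof (Hd1 _ Nz).
      rewrite (nsq_ext _ (subS (subS x (ys j)) (scaleS (RtoC t) y))) in H by (intros; cunf; ring).
      rewrite nsq_sub, nsq_real, rip_sym, rip_real_l, rip_sym in H; auto using H2_sub, H2_scale.
      assert (E1 : rip (subS x (ys j)) y = c + rip (subS p (ys j)) y).
      { unfold c. rewrite <- rip_add_l; auto using H2_sub. apply rip_ext. intros; cunf; ring. }
      pose proof (CS_abs (subS p (ys j)) y (H2_sub _ _ Hp Hj2) Hy2).
      rewrite nsq_sub_sym in H0.
      assert (- (t * rip (subS p (ys j)) y) <= Rabs t * (sqrt (nsq (subS (ys j) p)) * sqrt Y)).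
      { eapply Rle_trans. apply Rle_abs. rewrite Rabs_Ropp, Rabs_mult. apply Rmult_le_compat_l. apply Rabs_pos. exact H0. }
      fold Y in H. rewrite E1 in H.
      replace (2 * (t * (c + rip (subS p (ys j)) y))) with (2 * t * c + 2 * (t * rip (subS p (ys j)) y)) in H by ring.
      lra.
    - match goal with |- is_lim_seq ?f (Finite ?L) => cut (is_lim_seq f (L + 0 + 2*Rabs t*(0*sqrt Y)));
        [intros HL; replace (L + 0 + 2 * Rabs t * (0 * sqrt Y)) with L in HL by ring; exact HL|] end.
      apply is_lim_seq_plus'. apply is_lim_seq_plus'. apply is_lim_seq_const. apply lim_inv_S.
      apply is_lim_seq_scal_l with (a := 2 * Rabs t) (lu := Finite (0 * sqrt Y)).
      apply is_lim_seq_mult'. apply lim_sqrt0. exact Hconv. apply is_lim_seq_const. }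
  specialize (Hineq (c / (Y + 1))).
  assert (HY1 : 0 < Y + 1) by lra.
  assert (c * c * (Y + 2) <= 0).
  { replace (2 * (c / (Y + 1)) * c) with (2 * c * c / (Y+1)) in Hineq by (field; lra).
    replace (c / (Y + 1) * (c / (Y + 1)) * Y) with (c * c * Y / ((Y+1)*(Y+1))) in Hineq by (field; lra).
    apply (Rmult_le_compat_r ((Y+1)*(Y+1))) in Hineq; [|nra].
    replace (2 * c * c / (Y + 1) * ((Y + 1) * (Y + 1))) with (2 * c * c * (Y+1)) in Hineq by (field; lra).
    replace (c * c * Y / ((Y + 1) * (Y + 1)) * ((Y + 1) * (Y + 1))) with (c * c * Y) in Hineq by (field; lra).
    nra. }
  nra.
Qed.



Definition Zo (m : nat) (a : seqC) : Prop := forall k, (k < m)%nat -> a k = RtoC 0.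

Definition Fok (n : nat) (F : seqC -> seqC) : Prop :=
  (forall a, H2 a -> H2 (F a)) /\
  (forall a b, H2 a -> H2 b -> F (addS a b) = addS (F a) (F b)) /\
  (forall c a, H2 a -> F (scaleS c a) = scaleS c (F a)) /\
  (exists K, 0 <= K /\ forall a, H2 a -> nsq (F a) <= K * nsq a) /\
  (forall m, (n <= m)%nat -> F (zpow m) = zeroC) /\
  (forall m a, H2 a -> Zo m a -> forall k, (k <= m)%nat -> F a k = RtoC 0) /\
  (forall a b, H2 a -> H2 b -> opadd Mz F a = opadd Mz F b -> a = b).

Lemma Fok_of n F : n_perturbation n F -> Fok n F.
Proof.
  intros [[Fh [Fa [Fs [K [K0 KB]]]]] [Fz [Fp [L [[Lh [La [Ls LK]]] LS]]]]].
  refine (conj _ (conj _ (conj _ (conj _ (conj _ (conj _ _)))))).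
  - intros a Ha. apply inH2_iff, Fh, inH2_iff; auto.
  - intros a b Ha Hb. apply Fa; apply inH2_iff; auto.
  - intros c a Ha. apply Fs; apply inH2_iff; auto.
  - exists (K * K). split. nra. intros a Ha.
    pose proof (KB a (proj2 (inH2_iff a) Ha)). rewrite !h2norm_nsq in H.
    assert (HF : H2 (F a)) by (apply inH2_iff, Fh, inH2_iff; auto).
    pose proof (nsq_nonneg _ HF). pose proof (nsq_nonneg _ Ha).
    set (u := sqrt (nsq (F a))) in H. set (v := sqrt (nsq a)) in H.
    assert (Hu : u * u = nsq (F a)) by (apply sqrt_sqrt; auto).
    assert (Hv : v * v = nsq a) by (apply sqrt_sqrt; auto).
    assert (0 <= u) by apply sqrt_pos. assert (0 <= v) by apply sqrt_pos.
    assert (u * u <= (K*v)*(K*v)) by (apply Rmult_le_compat; auto).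
    rewrite <- Hu, <- Hv. nra.
  - exact Fz.
  - intros m a Ha Hz k Hk. destruct (Fp m a) as [H1 _]. split; [apply inH2_iff; auto|exact Hz]. apply H1; auto.
  - intros a b Ha Hb E. rewrite <- (LS a), <- (LS b) by (apply inH2_iff; auto). rewrite E; auto.
Qed.

Lemma scale0 v : scaleS (RtoC 0) v = zeroC.
Proof. apply functional_extensionality; intros k; unfold scaleS, zeroC. ring. Qed.
Lemma scale_zero c : scaleS c zeroC = zeroC.
Proof. apply functional_extensionality; intros k; unfold scaleS, zeroC. ring. Qed.
Lemma add_zero_l v : addS zeroC v = v.
Proof. apply functional_extensionality; intros k; unfold addS, zeroC. ring. Qed.
Lemma add_zero_r v : addS v zeroC = v.
Proof. apply functional_extensionality; intros k; unfold addS, zeroC. ring. Qed.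


Lemma F_zero n F : Fok n F -> F zeroC = zeroC.
Proof. intros [Fh [Fa [Fs _]]]. rewrite <- (scale0 zeroC) at 1. rewrite Fs by apply H2_zero. apply scale0. Qed.

Lemma F_sub n F a b : Fok n F -> H2 a -> H2 b -> F (subS a b) = subS (F a) (F b).
Proof. intros HF Ha Hb. pose proof HF as [Fh [Fa [Fs _]]].
  replace (subS a b) with (addS a (scaleS (RtoC (-1)) b)).
  rewrite Fa, Fs; auto using H2_scale. apply functional_extensionality; intros k; unfold addS, subS, scaleS. ring.
  apply functional_extensionality; intros k; unfold addS, subS, scaleS. ring.
Qed.

Definition Sop (F : seqC -> seqC) (a : seqC) : seqC := addS (Mz a) (F a).

Lemma Sop_eq F a : opadd Mz F a = Sop F a.
Proof. reflexivity. Qed.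

Lemma H2_S n F a : Fok n F -> H2 a -> H2 (Sop F a).
Proof. intros [Fh _] Ha. apply H2_add. apply H2_Mz; auto. auto. Qed.

Lemma S_add n F a b : Fok n F -> H2 a -> H2 b -> Sop F (addS a b) = addS (Sop F a) (Sop F b).
Proof. intros [Fh [Fa _]] Ha Hb. unfold Sop. rewrite Fa; auto.
  apply functional_extensionality; intros k; unfold addS, Mz. destruct k; ring. Qed.

Lemma S_scale n F c a : Fok n F -> H2 a -> Sop F (scaleS c a) = scaleS c (Sop F a).
Proof. intros [Fh [Fa [Fs _]]] Ha. unfold Sop. rewrite Fs; auto.
  apply functional_extensionality; intros k; unfold addS, scaleS, Mz. destruct k; ring. Qed.

Lemma S_sub n F a b : Fok n F -> H2 a -> H2 b -> Sop F (subS a b) = subS (Sop F a) (Sop F b).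
Proof. intros HF Ha Hb. unfold Sop. rewrite (F_sub n F); auto.
  apply functional_extensionality; intros k; unfold addS, subS, Mz. destruct k; ring. Qed.

Definition trunc (T : nat) (a : seqC) : seqC := fun k => if Nat.ltb k T then a k else RtoC 0.

Lemma H2_trunc T a : H2 (trunc T a).
Proof. apply (finsupp_ex _ T). intros k Hk. unfold sq, trunc.
  destruct (Nat.ltb_spec k T). lia. cunf; ring. Qed.

Lemma H2_zpow' m : H2 (zpow m).
Proof. apply H2_zpow. Qed.

Lemma F_trunc_zero n F N a : Fok n F -> (n <= N)%nat -> Zo N a -> forall T, F (trunc T a) = zeroC.
Proof.
  intros HF HN Hz T. pose proof HF as [Fh [Fa [Fs [_ [Fz _]]]]].
  induction T.
  - replace (trunc 0 a) with zeroC. apply (F_zero n); auto.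
    apply functional_extensionality; intros k; unfold trunc; reflexivity.
  - replace (trunc (S T) a) with (addS (trunc T a) (scaleS (a T) (zpow T))).
    rewrite Fa, Fs, IHT; auto using H2_trunc, H2_scale, H2_zpow.
    destruct (Nat.ltb_spec T N).
    + rewrite Hz by auto. rewrite scale0, add_zero_l; auto.
    + rewrite Fz by lia. rewrite scale_zero, add_zero_l; auto.
    + apply functional_extensionality; intros k; unfold addS, trunc, scaleS, zpow.
      destruct (Nat.ltb_spec k (S T)), (Nat.ltb_spec k T), (Nat.eqb_spec k T); subst; try lia; ring.
Qed.

Lemma F_vanish n F N a : Fok n F -> (n <= N)%nat -> H2 a -> Zo N a -> F a = zeroC.
Proof.
  intros HF HN Ha Hz. pose proof HF as [Fh [Fa [Fs [[K [K0 KB]] _]]]].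
  assert (Hb : forall T, nsq (F a) <= K * (nsq a - fsum (sq a) T)).
  { intros T.
    assert (E1 : Series (sq (trunc T a)) = fsum (sq a) T).
    { rewrite (finsupp_Series _ T). apply fsum_ext. intros k Hk. unfold sq, trunc. destruct (Nat.ltb_spec k T); auto; lia.
      intros k Hk. unfold sq, trunc. destruct (Nat.ltb_spec k T). lia. cunf; ring. }
    assert (E2 : nsq (subS a (trunc T a)) = nsq a - fsum (sq a) T).
    { unfold nsq. rewrite (Series_ext _ (fun k => sq a k - sq (trunc T a) k)).
      rewrite Series_minus; auto using H2_trunc. rewrite E1; auto. apply H2_trunc.
      intros k. unfold sq, subS, trunc. destruct (Nat.ltb_spec k T); cunf; ring. }
    assert (E3 : F a = F (subS a (trunc T a))).
    { replace a with (addS (trunc T a) (subS a (trunc T a))) at 1.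
      rewrite Fa, (F_trunc_zero n F N a), add_zero_l; auto using H2_trunc, H2_sub.
      apply functional_extensionality; intros k; unfold addS, subS. ring. }
    rewrite E3, <- E2. apply KB. apply H2_sub; auto using H2_trunc. }
  apply nsq_zero; auto.
  apply (lim_le_const (fun T => K * (nsq a - fsum (sq a) T))) with (c := nsq (F a)) (L := K * (nsq a - nsq a)) in Hb.
  lra.
  apply is_lim_seq_scal_l with (a := K) (lu := Finite (nsq a - nsq a)).
  apply is_lim_seq_minus'. apply is_lim_seq_const. apply fsum_lim. exact Ha.
Qed.



Definition dg (F : seqC -> seqC) (m : nat) : C := F (zpow m) (S m).

Lemma Zo_zpow m : Zo m (zpow m).
Proof. intros k Hk. unfold zpow. destruct (Nat.eqb_spec k m); auto; lia. Qed.

Lemma zpow_eq m : zpow m m = RtoC 1.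
Proof. unfold zpow. destruct (Nat.eqb_spec m m); auto; lia. Qed.

Lemma S_low n F m a : Fok n F -> H2 a -> Zo m a -> forall k, (k <= m)%nat -> Sop F a k = RtoC 0.
Proof. intros HF Ha Hz k Hk. pose proof HF as [_ [_ [_ [_ [_ [Fp _]]]]]].
  unfold Sop, addS. rewrite (Fp m a Ha Hz k Hk). destruct k; simpl.
  unfold RtoC; apply injective_projections; simpl; ring.
  rewrite Hz by lia. unfold RtoC; apply injective_projections; simpl; ring. Qed.

Lemma S_lead n F m a : Fok n F -> H2 a -> Zo m a ->
  Sop F a (S m) = Cmult (a m) (Cplus (RtoC 1) (dg F m)).
Proof. intros HF Ha Hz. pose proof HF as [Fh [Fa [Fs [_ [_ [Fp _]]]]]].
  set (r := subS a (scaleS (a m) (zpow m))).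
  assert (Hr : H2 r) by (apply H2_sub; auto using H2_scale, H2_zpow).
  assert (Zr : Zo (S m) r).
  { intros k Hk. unfold r, subS, scaleS, zpow. destruct (Nat.eqb_spec k m).
    subst. ring. rewrite Hz by lia. ring. }
  assert (Ea : a = addS (scaleS (a m) (zpow m)) r).
  { apply functional_extensionality; intros k. unfold r, addS, subS. ring. }
  unfold Sop, addS. rewrite Ea at 2. rewrite Fa, Fs; auto using H2_scale, H2_zpow.
  unfold addS, scaleS. rewrite (Fp (S m) r Hr Zr (S m)) by lia. unfold dg. simpl. ring.
Qed.

Lemma C10 : RtoC 1 <> RtoC 0.
Proof. intros H. injection H. lra. Qed.

Lemma diag_step n F k : Fok n F -> (k < n)%nat -> (forall j, (k < j)%nat -> Cplus (RtoC 1) (dg F j) <> RtoC 0) ->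
  Cplus (RtoC 1) (dg F k) <> RtoC 0.
Proof.
  intros HF Hk Hj Hd. pose proof HF as [Fh [Fa [Fs [_ [_ [Fp Finj]]]]]].
  assert (Cl : forall i, exists x, H2 x /\ Zo k x /\ x k = RtoC 1 /\ forall q, (q <= S k + i)%nat -> Sop F x q = RtoC 0).
  { induction i.
    - exists (zpow k). split. apply H2_zpow. split. apply Zo_zpow. split. rewrite zpow_eq; auto.
      intros q Hq. destruct (Nat.eq_dec q (S k)). subst. rewrite (S_lead n F k); auto using H2_zpow, Zo_zpow.
      rewrite Hd. ring. apply (S_low n F k); auto using H2_zpow, Zo_zpow. lia.
    - destruct IHi as [x [Hx [Zx [xk Sx]]]].
      set (l := (S k + i)%nat).
      set (c := Cdiv (Sop F x (S l)) (Cplus (RtoC 1) (dg F l))).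
      assert (Hl : Cplus (RtoC 1) (dg F l) <> RtoC 0) by (apply Hj; unfold l; lia).
      exists (subS x (scaleS c (zpow l))). split. apply H2_sub; auto using H2_scale, H2_zpow.
      split. intros q Hq. unfold subS, scaleS, zpow. rewrite Zx by auto. destruct (Nat.eqb_spec q l). unfold l in *; lia. ring.
      split. unfold subS, scaleS, zpow. rewrite xk. destruct (Nat.eqb_spec k l). unfold l in *; lia. ring.
      intros q Hq. rewrite (S_sub n F); auto using H2_scale, H2_zpow. rewrite (S_scale n F); auto using H2_zpow.
      unfold subS, scaleS. destruct (Nat.eq_dec q (S l)).
      + subst q. rewrite (S_lead n F l (zpow l)), zpow_eq; auto using H2_zpow, Zo_zpow.
        unfold c. field. auto.
      + rewrite Sx by (unfold l in *; lia). rewrite (S_low n F l); auto using H2_zpow, Zo_zpow. ring. unfold l in *; lia. }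
  destruct (Cl (n - S k)%nat) as [x [Hx [Zx [xk Sx]]]].
  set (y := Bk (Sop F x)).
  assert (Hy : H2 y) by (apply H2_Bk, (H2_S n); auto).
  assert (Zy : Zo n y). { intros q Hq. unfold y, Bk. apply Sx. lia. }
  assert (Fy : F y = zeroC) by (apply (F_vanish n F n); auto).
  assert (Sy : Sop F y = Sop F x).
  { unfold Sop at 1. rewrite Fy, add_zero_r. apply functional_extensionality; intros q.
    destruct q; unfold Mz, y, Bk; auto. symmetry. apply Sx. lia. }
  assert (y = x) by (apply Finj; auto).
  assert (y k = RtoC 0) by (apply Zy; auto).
  rewrite H, xk in H0. apply C10; auto.
Qed.

Lemma diag_ne n F : Fok n F -> forall m, Cplus (RtoC 1) (dg F m) <> RtoC 0.
Proof.
  intros HF.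
  assert (forall t j, (n - t <= j)%nat -> Cplus (RtoC 1) (dg F j) <> RtoC 0).
  { induction t; intros j Hj.
    - pose proof HF as [_ [_ [_ [_ [Fz _]]]]]. unfold dg. rewrite Fz by lia. unfold zeroC.
      intros H. apply C10. rewrite <- H. ring.
    - destruct (Compare_dec.le_lt_dec (n - t) j). apply IHt; auto.
      apply (diag_step n F j HF). lia. intros j' Hj'. apply IHt. lia. }
  intros m. apply (H n). lia.
Qed.



Fixpoint Mzn (l : nat) (a : seqC) : seqC := match l with O => a | S l' => Mz (Mzn l' a) end.

Lemma rip_Mz a b : rip (Mz a) (Mz b) = rip a b.
Proof. unfold rip. rewrite Series_incr_1_aux. apply Series_ext; intros; reflexivity. cunf; ring. Qed.

Lemma H2_Mzn l a : H2 a -> H2 (Mzn l a).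
Proof. induction l; simpl; auto using H2_Mz. Qed.

Lemma rip_Mzn l j a b : rip (Mzn l a) (Mzn (l + j) b) = rip a (Mzn j b).
Proof. induction l; simpl; auto. rewrite rip_Mz; auto. Qed.

Lemma nsq_Mzn l a : nsq (Mzn l a) = nsq a.
Proof. rewrite <- !rip_self. pose proof (rip_Mzn l 0 a a). rewrite Nat.add_0_r in H. exact H. Qed.

Fixpoint ON (L : list seqC) : Prop :=
  match L with [] => True | a :: L' => H2 a /\ nsq a = 1 /\ (forall b, In b L' -> rip a b = 0) /\ ON L' end.

Definition lsum (x : seqC) (L : list seqC) : seqC :=
  fold_right (fun b acc => addS (scaleS (RtoC (rip b x)) b) acc) zeroC L.
Definition ssq (x : seqC) (L : list seqC) : R :=
  fold_right (fun b acc => rip b x * rip b x + acc) 0 L.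

Lemma ON_H2 L : ON L -> forall b, In b L -> H2 b.
Proof. induction L; simpl; intros H b Hb; [contradiction|]. destruct H as [H1 [_ [_ H4]]].
  destruct Hb; subst; auto. Qed.

Lemma H2_lsum x L : ON L -> H2 (lsum x L).
Proof. induction L; simpl; intros H. apply H2_zero. destruct H as [H1 [_ [_ H4]]].
  apply H2_add; auto. apply H2_scale; auto. Qed.


Lemma rip_zero_l a : rip zeroC a = 0.
Proof. rewrite rip_sym. apply rip_zero_r. Qed.

Lemma rip_lsum_orth x L a : ON L -> H2 a -> (forall b, In b L -> rip a b = 0) -> rip (lsum x L) a = 0.
Proof. induction L as [|b L IH]; simpl; intros H Ha Ho. apply rip_zero_l.
  destruct H as [H1 [_ [_ H4]]].
  rewrite rip_add_l, rip_real_l; auto using H2_scale, H2_lsum. rewrite IH; auto.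
  rewrite (rip_sym b a), Ho; auto. ring. Qed.

Lemma bessel_eq x L : ON L -> H2 x -> nsq (subS x (lsum x L)) = nsq x - ssq x L.
Proof.
  induction L as [|b L IH]; simpl; intros H Hx.
  - rewrite (nsq_ext _ x). ring. intros; cunf; ring.
  - destruct H as [H1 [H2b [H3 H4]]].
    assert (Hr : H2 (subS x (lsum x L))) by (apply H2_sub; auto using H2_lsum).
    rewrite (nsq_ext _ (subS (subS x (lsum x L)) (scaleS (RtoC (rip b x)) b))) by (intros; cunf; ring).
    rewrite nsq_sub, nsq_real, IH, H2b; auto using H2_scale.
    rewrite (rip_sym (subS x (lsum x L))), rip_real_l, (rip_sym b (subS x (lsum x L))), rip_sub_l, rip_lsum_orth, (rip_sym x b); auto using H2_lsum.
    ring.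
Qed.

Lemma bessel x L : ON L -> H2 x -> ssq x L <= nsq x.
Proof. intros H Hx. pose proof (bessel_eq x L H Hx).
  pose proof (nsq_nonneg _ (H2_sub _ _ Hx (H2_lsum x L H))). lra. Qed.

Lemma fsum_zero f N : (forall j, (j < N)%nat -> f j = 0) -> fsum f N = 0.
Proof. induction N; simpl; intros H; auto. rewrite IHN, H; auto; lra. Qed.

Lemma nsq_zpow k : nsq (zpow k) = 1.
Proof. unfold nsq. rewrite (finsupp_Series _ (S k)). simpl.
  rewrite fsum_zero. unfold sq. rewrite zpow_eq. cunf; ring.
  intros j Hj. unfold sq, zpow. destruct (Nat.eqb_spec j k). lia. cunf; ring.
  intros j Hj. unfold sq, zpow. destruct (Nat.eqb_spec j k). lia. cunf; ring. Qed.

Lemma rip_coord a k : rip a (zpow k) = fst (a k) /\ rip a (iS (zpow k)) = snd (a k).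
Proof. unfold rip. split.
  - rewrite (finsupp_Series _ (S k)). simpl.
    rewrite fsum_zero. unfold pr. rewrite zpow_eq. cunf; ring.
    intros j Hj. unfold pr, zpow. destruct (Nat.eqb_spec j k). lia. cunf; ring.
    intros j Hj. unfold pr, zpow. destruct (Nat.eqb_spec j k). lia. cunf; ring.
  - rewrite (finsupp_Series _ (S k)). simpl.
    rewrite fsum_zero. unfold pr, iS, scaleS. rewrite zpow_eq. cunf; ring.
    intros j Hj. unfold pr, iS, scaleS, zpow. destruct (Nat.eqb_spec j k). lia. cunf; ring.
    intros j Hj. unfold pr, iS, scaleS, zpow. destruct (Nat.eqb_spec j k). lia. cunf; ring. Qed.

Definition lsumR (f : seqC -> R) (L : list seqC) : R := fold_right (fun a acc => f a + acc) 0 L.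

Lemma lsumR_app f L1 L2 : lsumR f (L1 ++ L2) = lsumR f L1 + lsumR f L2.
Proof. induction L1; simpl; [ring|]. rewrite IHL1; ring. Qed.

Lemma lsumR_sq L k : lsumR (fun a => sq a k) L = ssq (zpow k) L + ssq (iS (zpow k)) L.
Proof. induction L; simpl; [ring|]. rewrite IHL. destruct (rip_coord a k) as [E1 E2].
  rewrite E1, E2. unfold sq, sqc. ring. Qed.

Lemma lsumR_exch L N : lsumR (fun a => fsum (sq a) N) L = fsum (fun k => lsumR (fun a => sq a k) L) N.
Proof. induction L; simpl.
  - induction N; simpl; auto. rewrite <- IHN. ring.
  - rewrite IHL. rewrite <- fsum_plus. apply fsum_ext. intros; reflexivity. Qed.

Lemma trace_upper L N : ON L -> lsumR (fun a => fsum (sq a) N) L <= 2 * INR N.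
Proof. intros H. rewrite lsumR_exch.
  apply Rle_trans with (fsum (fun _ => 2) N).
  apply fsum_le. intros k. rewrite lsumR_sq.
  pose proof (bessel (zpow k) L H (H2_zpow k)). pose proof (bessel (iS (zpow k)) L H (H2_iS _ (H2_zpow k))).
  rewrite nsq_iS, nsq_zpow in *. lra.
  induction N. simpl; lra. replace (fsum (fun _ => 2) (S N)) with (fsum (fun _ => 2) N + 2) by reflexivity. rewrite S_INR. lra. Qed.

Lemma ON_app L1 L2 : ON L1 -> ON L2 -> (forall a b, In a L1 -> In b L2 -> rip a b = 0) -> ON (L1 ++ L2).
Proof. induction L1 as [|a L1 IH]; simpl; intros H1 H2' Ho; auto.
  destruct H1 as [A1 [A2 [A3 A4]]]. split; auto. split; auto. split.
  intros b Hb. apply in_app_iff in Hb. destruct Hb; auto.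
  apply IH; auto. Qed.

Fixpoint famR (bs : list seqC) (N : nat) : list seqC :=
  match N with O => [] | S N' => map (Mzn N') bs ++ famR bs N' end.

Lemma in_famR bs N b : In b (famR bs N) -> exists l y, (l < N)%nat /\ In y bs /\ b = Mzn l y.
Proof. induction N; simpl; [contradiction|]. intros H. apply in_app_iff in H. destruct H.
  apply in_map_iff in H. destruct H as [y [<- Hy]]. exists N, y. auto.
  destruct (IHN H) as [l [y [Hl [Hy ->]]]]. exists l, y. auto. Qed.

Lemma PN_Mzn l N x : fsum (sq (Mzn l x)) (l + N) = fsum (sq x) N.
Proof. induction l. reflexivity.
  change (fsum (sq (Mz (Mzn l x))) (S (l + N)) = fsum (sq x) N).
  rewrite fsum_shift. rewrite <- IHl.
  replace (sq (Mz (Mzn l x)) 0) with 0 by (cunf; ring). rewrite Rplus_0_l.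
  apply fsum_ext. intros; reflexivity. Qed.

Lemma sq_Mzn_iS l x k : sq (Mzn l (iS x)) k = sq (Mzn l x) k.
Proof. revert k; induction l; intros k; simpl. cunf; ring.
  destruct k; simpl. cunf; ring. specialize (IHl k). unfold sq, Mz in *. exact IHl. Qed.

Lemma rip_Mzn_same l x y : rip (Mzn l x) (Mzn l y) = rip x y.
Proof. pose proof (rip_Mzn l 0 x y). rewrite Nat.add_0_r in H. exact H. Qed.

Lemma rip_iS_iS a b : rip (iS a) (iS b) = rip a b.
Proof. apply rip_ext. intros; cunf; ring. Qed.

Lemma ON4 a b c d : H2 a -> H2 b -> H2 c -> H2 d -> nsq a = 1 -> nsq b = 1 -> nsq c = 1 -> nsq d = 1 ->
  rip a b = 0 -> rip a c = 0 -> rip a d = 0 -> rip b c = 0 -> rip b d = 0 -> rip c d = 0 -> ON [a; b; c; d].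
Proof. intros. simpl. repeat split; auto; intros z Hz; simpl in Hz; intuition (subst; auto). Qed.

Lemma trace_contra e1 e2 :
  H2 e1 -> H2 e2 -> nsq e1 = 1 -> nsq e2 = 1 -> rip e1 e2 = 0 -> rip e1 (iS e2) = 0 ->
  (forall x y, In x [e1; iS e1; e2; iS e2] -> In y [e1; iS e1; e2; iS e2] -> forall j, rip x (Mzn (S j) y) = 0) -> False.
Proof.
  intros H1 H2' N1 N2 O12 O12i HW.
  set (bs := [e1; iS e1; e2; iS e2]).
  assert (Hbs : forall x, In x bs -> H2 x).
  { intros x Hx. unfold bs in Hx. simpl in Hx. intuition (subst; auto using H2_iS). }
  assert (ONl : forall l, ON (map (Mzn l) bs)).
  { intros l. simpl. apply ON4; auto using H2_Mzn, H2_iS; rewrite ?nsq_Mzn, ?nsq_iS, ?rip_Mzn_same; auto.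
    all: first [apply rip_iS_self | (rewrite rip_iS, O12i; ring) | (rewrite rip_iS_iS; auto)]. }
  assert (ONf : forall N, ON (famR bs N)).
  { induction N. simpl; auto. change (famR bs (S N)) with (map (Mzn N) bs ++ famR bs N). apply ON_app; auto.
    intros a b Ha Hb. apply in_map_iff in Ha. destruct Ha as [x [<- Hx]].
    destruct (in_famR _ _ _ Hb) as [l [y [Hl [Hy ->]]]].
    rewrite rip_sym. replace N with (l + S (N - S l))%nat by lia. rewrite rip_Mzn. apply HW; auto. }
  assert (Hlim : is_lim_seq (fun T => fsum (sq e1) T + fsum (sq e2) T) 2).
  { replace 2 with (nsq e1 + nsq e2) by lra. apply is_lim_seq_plus'; apply fsum_lim; auto. }
  apply is_lim_seq_Reals in Hlim. destruct (Hlim (1/2)) as [T0 HT0]. lra.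
  set (T := S T0). specialize (HT0 T ltac:(unfold T; lia)). unfold R_dist in HT0. apply Rabs_def2 in HT0.
  set (s := fsum (sq e1) T + fsum (sq e2) T) in HT0.
  set (N := (3 * T)%nat).
  set (PN := fun a => fsum (sq a) N).
  set (G := fun N' => lsumR PN (famR bs N')).
  assert (Hlev0 : forall l, 0 <= lsumR PN (map (Mzn l) bs)).
  { intros l. simpl. unfold PN. pose proof (fun a => fsum_nonneg (sq a) N (sq_nonneg a)). 
    pose proof (H (Mzn l e1)). pose proof (H (Mzn l (iS e1))). pose proof (H (Mzn l e2)). pose proof (H (Mzn l (iS e2))). lra. }
  assert (Hlev : forall l, (l + T <= N)%nat -> 3 <= lsumR PN (map (Mzn l) bs)).
  { intros l Hl. simpl. unfold PN.
    rewrite (fsum_ext (sq (Mzn l (iS e1))) (sq (Mzn l e1))) by (intros; apply sq_Mzn_iS).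
    rewrite (fsum_ext (sq (Mzn l (iS e2))) (sq (Mzn l e2))) by (intros; apply sq_Mzn_iS).
    assert (A1 : fsum (sq e1) T <= fsum (sq (Mzn l e1)) N).
    { rewrite <- (PN_Mzn l T). apply fsum_mono; auto using sq_nonneg. }
    assert (A2 : fsum (sq e2) T <= fsum (sq (Mzn l e2)) N).
    { rewrite <- (PN_Mzn l T). apply fsum_mono; auto using sq_nonneg. }
    unfold s in HT0. lra. }
  assert (Gmono : forall a b, (a <= b)%nat -> G a <= G b).
  { intros a b Hab. induction Hab. lra. unfold G in *. change (famR bs (S m)) with (map (Mzn m) bs ++ famR bs m). rewrite lsumR_app.
    pose proof (Hlev0 m). lra. }
  assert (Glow : forall N', (N' <= 2 * T + 1)%nat -> 3 * INR N' <= G N').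
  { induction N'; intros HN. simpl. unfold G. simpl. lra.
    unfold G in *. change (famR bs (S N')) with (map (Mzn N') bs ++ famR bs N'). rewrite lsumR_app. rewrite S_INR.
    pose proof (Hlev N' ltac:(unfold N; lia)). pose proof (IHN' ltac:(lia)). lra. }
  pose proof (Glow (2 * T + 1)%nat (le_n _)) as Q1.
  pose proof (Gmono (2 * T + 1)%nat N ltac:(unfold N, T; lia)) as Q2.
  pose proof (trace_upper (famR bs N) N (ONf N)) as Q3.
  change (lsumR (fun a => fsum (sq a) N) (famR bs N)) with (G N) in Q3.
  assert (E1 : INR (2 * T + 1) = 2 * INR T + 1) by (rewrite plus_INR, mult_INR; simpl; ring).
  assert (E2 : INR N = 3 * INR T) by (unfold N; rewrite mult_INR; simpl; ring).
  rewrite E1 in Q1. rewrite E2 in Q3. lra.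
Qed.



Lemma cs_H2 X : closed_subspace X -> forall a, X a -> H2 a.
Proof. intros [H _] a Ha. apply inH2_iff; auto. Qed.

Lemma cs_rcs X : closed_subspace X -> rcs X.
Proof. intros HX. pose proof HX as [XH [X0 [Xa [Xs Xc]]]]. split. apply cs_H2; auto.
  split; auto. split; auto. split. intros; apply Xs; auto.
  intros u a Hu Ha Hc. apply (Xc u); auto. apply inH2_iff; auto. apply conv_h2norm; auto. Qed.

Lemma cs_conv X : closed_subspace X -> forall u a, (forall j, X (u j)) -> H2 a -> conv u a -> X a.
Proof. intros HX. apply cs_rcs; auto. Qed.

Lemma cs_iS X a : closed_subspace X -> X a -> X (iS a).
Proof. intros [_ [_ [_ [Xs _]]]] H. apply Xs; auto. Qed.

Lemma cs_sub X a b : closed_subspace X -> X a -> X b -> X (subS a b).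
Proof. intros [_ [_ [Xa [Xs _]]]] Ha Hb.
  replace (subS a b) with (addS a (scaleS (RtoC (-1)) b)). apply Xa; auto.
  apply functional_extensionality; intros; unfold addS, subS, scaleS; ring. Qed.

Lemma coord_closed u a k : (forall j, u j k = RtoC 0) -> (forall j, H2 (u j)) -> H2 a -> conv u a -> a k = RtoC 0.
Proof. intros Hz Hu Ha Hc. apply sqc_zero.
  apply Rle_antisym; [|apply sqc_nonneg].
  apply (lim_le_const (fun j => nsq (subS (u j) a)) 0 (sqc (a k))); auto. intros j.
  pose proof (coord_le (subS (u j) a) k (H2_sub _ _ (Hu j) Ha)).
  replace (sqc (a k)) with (sq (subS (u j) a) k); auto. unfold sq, subS; cbv beta. rewrite Hz. cunf; ring. Qed.

Lemma h2conv_conv X u a : closed_subspace X -> (forall j, X (u j)) -> inH2 a ->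
  is_lim_seq (fun j => h2norm (subS (u j) a)) 0 -> conv u a.
Proof. intros HX Hu Ha Hl. apply h2norm_conv; auto. intros j. apply H2_sub. apply (cs_H2 X); auto. apply inH2_iff; auto. Qed.

Lemma cs_Zo X m : closed_subspace X -> closed_subspace (fun a => X a /\ Zo m a).
Proof. intros HX. pose proof HX as [XH [X0 [Xa [Xs Xc]]]]. split; [|split; [|split; [|split]]].
  - intros a [Ha _]; auto.
  - split; auto. intros k _; reflexivity.
  - intros a b [Ha Za] [Hb Zb]. split; auto. intros k Hk. unfold addS. rewrite Za, Zb by auto. unfold RtoC; apply injective_projections; simpl; ring.
  - intros c a [Ha Za]. split; auto. intros k Hk. unfold scaleS. rewrite Za by auto. unfold RtoC; apply injective_projections; simpl; ring.
  - intros u a Hu Ha Hl. split. apply (Xc u); auto. intros j; apply Hu.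
    intros k Hk. assert (Hc : conv u a) by (apply (h2conv_conv X); auto; intros j; apply Hu).
    apply (coord_closed u); auto. intros j; apply Hu; auto. intros j. apply (cs_H2 X); auto. apply Hu. apply inH2_iff; auto.
Qed.

Lemma cs_coord X m : closed_subspace X -> closed_subspace (fun a => X a /\ a m = RtoC 0).
Proof. intros HX. pose proof HX as [XH [X0 [Xa [Xs Xc]]]]. split; [|split; [|split; [|split]]].
  - intros a [Ha _]; auto.
  - split; auto.
  - intros a b [Ha Za] [Hb Zb]. split; auto. unfold addS. rewrite Za, Zb. unfold RtoC; apply injective_projections; simpl; ring.
  - intros c a [Ha Za]. split; auto. unfold scaleS. rewrite Za. unfold RtoC; apply injective_projections; simpl; ring.
  - intros u a Hu Ha Hl. split. apply (Xc u); auto. intros j; apply Hu.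
    assert (Hc : conv u a) by (apply (h2conv_conv X); auto; intros j; apply Hu).
    apply (coord_closed u); auto. intros j; apply Hu; auto. intros j. apply (cs_H2 X); auto. apply Hu. apply inH2_iff; auto.
Qed.

Definition zMp (X : seqC -> Prop) : seqC -> Prop := fun a => a O = RtoC 0 /\ X (Bk a).

Lemma nsq_Bk v : H2 v -> nsq (Bk v) <= nsq v.
Proof. intros Hv. unfold nsq. rewrite (Series_incr_1 (sq v)); auto. pose proof (sq_nonneg v 0).
  change (Series (sq (Bk v))) with (Series (fun k => sq v (S k))). lra. Qed.

Lemma MzBk a : a O = RtoC 0 -> Mz (Bk a) = a.
Proof. intros H. apply functional_extensionality; intros k. destruct k; simpl; auto. Qed.

Lemma cs_zMp X : closed_subspace X -> closed_subspace (zMp X).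
Proof. intros HX. pose proof HX as [XH [X0 [Xa [Xs Xc]]]]. split; [|split; [|split; [|split]]].
  - intros a [Ha Za]. apply inH2_iff. rewrite <- (MzBk a) by auto. apply H2_Mz. apply (cs_H2 X); auto.
  - split. reflexivity. exact X0.
  - intros a b [Ha Za] [Hb Zb]. split. unfold addS. rewrite Ha, Hb. unfold RtoC; apply injective_projections; simpl; ring.
    apply (Xa _ _ Za Zb).
  - intros c a [Ha Za]. split. unfold scaleS. rewrite Ha. unfold RtoC; apply injective_projections; simpl; ring.
    apply (Xs c _ Za).
  - intros u a Hu Ha Hl.
    assert (Hu2 : forall j, H2 (u j)) by (intros j; rewrite <- (MzBk (u j)) by apply Hu; apply H2_Mz, (cs_H2 X); auto; apply Hu).
    assert (Hc : conv u a) by (apply h2norm_conv; auto; intros j; apply H2_sub; auto; apply inH2_iff; auto).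
    assert (Ha2 : H2 a) by (apply inH2_iff; auto).
    split. apply (coord_closed u); auto. intros j; apply Hu.
    apply (cs_conv X HX (fun j => Bk (u j))). intros j; apply Hu. apply H2_Bk; auto.
    unfold conv. apply (is_lim_seq_le_le (fun _ => 0) _ (fun j => nsq (subS (u j) a))).
    intros j. split. apply nsq_nonneg. apply H2_sub; apply H2_Bk; auto.
    apply (nsq_Bk (subS (u j) a)). apply H2_sub; auto.
    apply is_lim_seq_const. exact Hc.
Qed.

Lemma orth_iff a b : orth a b <-> rip a b = 0 /\ rip a (iS b) = 0.
Proof. unfold orth. 
  rewrite (Series_ext (fun k => Re (Cmult (a k) (Cconj (b k)))) (pr a b)) by (intros; unfold Re, Cconj; cunf; ring).
  rewrite (Series_ext (fun k => Im (Cmult (a k) (Cconj (b k)))) (pr a (iS b))) by (intros; unfold Im, Cconj; cunf; ring).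
  tauto. Qed.



Lemma rip_real_r a t b : H2 a -> H2 b -> rip a (scaleS (RtoC t) b) = t * rip a b.
Proof. intros. rewrite rip_sym, rip_real_l, rip_sym; auto. Qed.

Lemma iS_real t b : iS (scaleS (RtoC t) b) = scaleS (RtoC t) (iS b).
Proof. apply functional_extensionality; intros k. cunf. apply injective_projections; simpl; ring. Qed.

Lemma nsq_pos_of a k : H2 a -> a k <> RtoC 0 -> 0 < nsq a.
Proof. intros Ha Hk. destruct (Rle_lt_dec (nsq a) 0); auto. exfalso. apply Hk.
  rewrite (nsq_zero a Ha r). reflexivity. Qed.

Lemma Mzn_in X l y : (forall y, X y -> X (Mz y)) -> X y -> X (Mzn l y).
Proof. intros H Hy. induction l; simpl; auto. Qed.

Lemma normalize a : H2 a -> 0 < nsq a -> nsq (scaleS (RtoC (/ sqrt (nsq a))) a) = 1.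
Proof. intros Ha Hp. rewrite nsq_real; auto.
  assert (Hs : sqrt (nsq a) * sqrt (nsq a) = nsq a) by (apply sqrt_sqrt; lra).
  assert (0 < sqrt (nsq a)) by (apply sqrt_lt_R0; auto).
  field_simplify; [|lra]. rewrite <- Hs at 1. field. lra. Qed.

Lemma wand_dim (Mp Zp : seqC -> Prop) N f r :
  closed_subspace Mp -> closed_subspace Zp ->
  (forall y, Mp y -> Zp (Mz y)) -> (forall y, Mp y -> Mp (Mz y)) ->
  Mp f -> (forall y, Zp y -> rip f y = 0) -> f N = RtoC 1 ->
  Mp r -> (forall y, Zp y -> rip r y = 0) -> r N = RtoC 0 -> r = zeroC.
Proof.
  intros HM HZ MZ MM Mf Of fN Mr Or rN.
  set (W := fun x => Mp x /\ forall y, Zp y -> rip x y = 0).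
  assert (WH : forall x, W x -> H2 x) by (intros x [Hx _]; apply (cs_H2 Mp); auto).
  assert (Wi : forall x, W x -> W (iS x)).
  { intros x [Hx Ox]. split. apply cs_iS; auto. intros y Hy. rewrite rip_iS, Ox; auto. ring. apply cs_iS; auto. }
  assert (Ws : forall t x, W x -> W (scaleS (RtoC t) x)).
  { intros t x [Hx Ox]. split. apply HM; auto. intros y Hy. rewrite rip_real_l, Ox; auto. ring.
    apply (cs_H2 Mp); auto. apply (cs_H2 Zp); auto. }
  assert (Wsub : forall x z, W x -> W z -> W (subS x z)).
  { intros x z [Hx Ox] [Hz Oz]. split. apply cs_sub; auto. intros y Hy. rewrite rip_sub_l, Ox, Oz; auto. ring.
    apply (cs_H2 Mp); auto. apply (cs_H2 Mp); auto. apply (cs_H2 Zp); auto. }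
  assert (Wf : W f) by (split; auto). assert (Wr : W r) by (split; auto).
  assert (Hf2 : H2 f) by auto. assert (Hr2 : H2 r) by auto.
  assert (Pf : 0 < nsq f) by (apply (nsq_pos_of f N); auto; rewrite fN; apply C10).
  set (be := rip r f / nsq f). set (ga := rip r (iS f) / nsq f).
  set (r' := subS (subS r (scaleS (RtoC be) f)) (scaleS (RtoC ga) (iS f))).
  assert (Wr' : W r') by (apply Wsub; auto).
  assert (Hr'2 : H2 r') by auto.
  assert (O1 : rip r' f = 0).
  { unfold r'. rewrite !rip_sub_l, !rip_real_l, rip_iS, rip_iS_self, rip_self; auto using H2_scale, H2_sub, H2_iS.
    unfold be. field. lra. }
  assert (O2 : rip r' (iS f) = 0).
  { unfold r'. rewrite !rip_sub_l, !rip_real_l, rip_iS_self, rip_self, nsq_iS; auto using H2_scale, H2_sub, H2_iS.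
    unfold ga. field. lra. }
  assert (Hdec : r = addS r' (addS (scaleS (RtoC be) f) (scaleS (RtoC ga) (iS f)))).
  { apply functional_extensionality; intros k. unfold r'. cunf. apply injective_projections; simpl; ring. }
  destruct (Rle_lt_dec (nsq r') 0) as [Hz|Hp].
  - assert (r' = zeroC) by (apply nsq_zero; auto).
    assert (HN := f_equal (fun v => v N) Hdec). simpl in HN. rewrite H in HN. rewrite rN in HN.
    assert (F1 : fst (f N) = 1) by (rewrite fN; reflexivity). assert (F2 : snd (f N) = 0) by (rewrite fN; reflexivity).
    unfold addS, scaleS, iS, zeroC, Cplus, Cmult, RtoC in HN; simpl in HN.
    injection HN as E1 E2. rewrite F1, F2 in E1, E2. ring_simplify in E1. ring_simplify in E2.
    assert (be = 0) by lra. assert (ga = 0) by lra.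
    rewrite Hdec, H. rewrite H0, H1. apply functional_extensionality; intros k. cunf.
    apply injective_projections; simpl; ring.
  - exfalso.
    set (e1 := scaleS (RtoC (/ sqrt (nsq f))) f). set (e2 := scaleS (RtoC (/ sqrt (nsq r'))) r').
    assert (We1 : W e1) by (apply Ws; auto). assert (We2 : W e2) by (apply Ws; auto).
    apply (trace_contra e1 e2); auto.
    + apply normalize; auto.
    + apply normalize; auto.
    + unfold e1, e2. rewrite rip_real_l, rip_real_r, rip_sym, O1; auto using H2_scale. ring.
    + unfold e1, e2. rewrite iS_real, rip_real_l, rip_real_r, rip_sym, rip_iS, O2; auto using H2_scale, H2_iS. ring.
    + intros x y Hx Hy j.
      assert (Wx : W x). { simpl in Hx. destruct Hx as [<-|[<-|[<-|[<-|[]]]]]; auto. }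
      assert (My : Mp y). { simpl in Hy. destruct Hy as [<-|[<-|[<-|[<-|[]]]]]; try apply Wi; apply We1 || apply We2. }
      apply Wx. simpl. apply MZ. apply Mzn_in; auto.
Qed.



Lemma min_nat (P : nat -> Prop) : (exists k, P k) -> exists m, P m /\ forall k, (k < m)%nat -> ~ P k.
Proof.
  intros [k Hk]. revert Hk. induction k as [k IH] using (well_founded_induction Wf_nat.lt_wf). intros Hk.
  destruct (classic (exists j, (j < k)%nat /\ P j)) as [[j [Hj Pj]]|Hn].
  - apply (IH j); auto.
  - exists k. split; auto. intros j Hj Pj. apply Hn. exists j; auto.
Qed.

Lemma nonzero_coord (a : seqC) : a <> zeroC -> exists k, a k <> RtoC 0.
Proof. intros H. apply NNPP. intros Hn. apply H. apply functional_extensionality; intros k.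
  apply NNPP. intros Hk. apply Hn. exists k. auto. Qed.

Lemma Cinv_mul (c : C) : c <> RtoC 0 -> Cmult (Cinv c) c = RtoC 1.
Proof. intros H. apply Cinv_l. auto. Qed.

Theorem theorem3p1 (n : nat) (F : seqC -> seqC) (M : seqC -> Prop) :
  (1 <= n)%nat ->
  n_perturbation n F ->
  closed_subspace M ->
  (exists a, M a /\ a <> zeroC) ->
  (forall a, M a -> M (opadd Mz F a)) ->
  dim_one (wandering (opadd Mz F) M).
Proof.
  intros Hn HP HM [a0 [Ma0 Hne]] HS.
  pose proof (Fok_of n F HP) as HF.
  pose proof HF as [Fh [Fa [Fs [_ [Fz [Fp Finj]]]]]].
  pose proof HM as [_ [M0 [Madd [Msc Mcl]]]].
  assert (MH : forall a, M a -> H2 a) by (apply cs_H2; auto).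
  assert (MS : forall a, M a -> M (Sop F a)) by exact HS.
  destruct (min_nat (fun k => exists a, M a /\ a k <> RtoC 0)) as [m0 [[b0 [Mb0 Hb0]] Hmin]].
  { destruct (nonzero_coord a0 Hne) as [k Hk]. exists k, a0. auto. }
  assert (Zm0 : forall a, M a -> Zo m0 a).
  { intros a Ha k Hk. apply NNPP. intros Hn'. apply (Hmin k Hk). exists a; auto. }
  assert (E1 : forall t, exists e, M e /\ Zo (m0 + t) e /\ e (m0 + t)%nat = RtoC 1).
  { induction t.
    - exists (scaleS (Cinv (b0 m0)) b0). rewrite Nat.add_0_r. split. apply Msc; auto.
      split. intros k Hk. unfold scaleS. rewrite (Zm0 b0 Mb0 k Hk). ring.
      unfold scaleS. apply Cinv_mul; auto.
    - destruct IHt as [e [Me [Ze ee]]].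
      set (v := Sop F e).
      assert (Hv : v (S (m0 + t)) = Cplus (RtoC 1) (dg F (m0 + t))).
      { unfold v. rewrite (S_lead n F); auto. rewrite ee. ring. }
      assert (Hv0 : v (S (m0 + t)) <> RtoC 0) by (rewrite Hv; apply (diag_ne n F HF)).
      exists (scaleS (Cinv (v (S (m0 + t)))) v). rewrite Nat.add_succ_r. split. apply Msc, MS; auto.
      split. intros k Hk. unfold scaleS. replace (v k) with (RtoC 0). ring. symmetry. unfold v. apply (S_low n F (m0 + t) e); auto. lia.
      unfold scaleS. apply Cinv_mul; auto. }
  set (N := (m0 + n)%nat).
  set (Mp := fun a => M a /\ Zo N a).
  assert (HMp : closed_subspace Mp) by (apply cs_Zo; auto).
  assert (MpH : forall a, Mp a -> H2 a) by (intros a [Ha _]; auto).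
  assert (MzS : forall a, Mp a -> Mz a = Sop F a).
  { intros a [Ha Za]. unfold Sop. rewrite (F_vanish n F N a); auto. rewrite add_zero_r. auto. unfold N; lia. }
  assert (MpMz : forall a, Mp a -> Mp (Mz a)).
  { intros a Ha. split. rewrite MzS; auto. apply MS, Ha.
    intros k Hk. destruct k; simpl; auto. apply Ha. lia. }
  set (Zp := zMp Mp).
  assert (HZp : closed_subspace Zp) by (apply cs_zMp; auto).
  assert (ZpMp : forall a, Zp a -> Mp a).
  { intros a [Ha0 Ha]. rewrite <- (MzBk a) by auto. apply MpMz; auto. }
  assert (MpZp : forall y, Mp y -> Zp (Mz y)).
  { intros y Hy. split. reflexivity. exact Hy. }
  assert (ZpN : forall a, Zp a -> a N = RtoC 0).
  { intros a [Ha0 [_ Ha]]. unfold N. replace (m0 + n)%nat with (S (m0 + n - 1)) by lia.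
    apply (Ha (m0 + n - 1)%nat). unfold N. lia. }
  destruct (E1 n) as [eN [MeN [ZeN eNN]]]. fold N in ZeN, eNN.
  destruct (projection Zp eN (cs_rcs Zp HZp) (MH eN MeN)) as [pN [ZpN' OpN]].
  set (f' := subS eN pN).
  assert (Mf' : Mp f') by (apply cs_sub; auto; split; auto).
  assert (f'N : f' N = RtoC 1).
  { unfold f', subS. rewrite eNN, ZpN; auto. unfold RtoC. apply injective_projections; simpl; ring. }
  assert (Kp : forall g, Mp g -> g N = RtoC 0 -> Zp g).
  { intros g Mg gN.
    destruct (projection Zp g (cs_rcs Zp HZp) (MpH g Mg)) as [p [Zpp Op]].
    assert (Hr : subS g p = zeroC).
    { apply (wand_dim Mp Zp N f' (subS g p)); auto.
      apply cs_sub; auto. unfold subS. rewrite gN, ZpN; auto. unfold RtoC. apply injective_projections; simpl; ring. }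
    replace g with p; auto. apply functional_extensionality; intros k.
    assert (H := f_equal (fun v => v k) Hr). simpl in H. unfold subS, zeroC in H.
    assert (E : g k = Cplus (Cminus (g k) (p k)) (p k)) by ring. rewrite E, H. ring. }
  assert (CN : forall g, M g -> Zo (S N) g -> exists h, M h /\ Sop F h = g).
  { intros g Mg Zg. assert (Mpg : Mp g) by (split; auto; intros k Hk; apply Zg; lia).
    assert (Zpg : Zp g) by (apply Kp; auto; apply Zg; lia).
    exists (Bk g). destruct Zpg as [g0 MpBg]. split. apply MpBg.
    rewrite <- MzS by auto. apply MzBk; auto. }
  assert (Cstep : forall k, (m0 < k)%nat -> (forall g, M g -> Zo (S k) g -> exists h, M h /\ Sop F h = g) ->
                  forall g, M g -> Zo k g -> exists h, M h /\ Sop F h = g).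
  { intros k Hk IH g Mg Zg.
    destruct (E1 (k - 1 - m0)%nat) as [e [Me [Ze ee]]].
    replace (m0 + (k - 1 - m0))%nat with (k - 1)%nat in Ze, ee by lia.
    set (v := Sop F e).
    assert (Hv : v k = Cplus (RtoC 1) (dg F (k - 1))).
    { unfold v. replace k with (S (k - 1)) at 1 by lia. rewrite (S_lead n F); auto. rewrite ee. ring. }
    assert (Hv0 : v k <> RtoC 0) by (rewrite Hv; apply (diag_ne n F HF)).
    assert (Zv : Zo k v).
    { intros q Hq. unfold v. apply (S_low n F (k - 1) e); auto. lia. }
    set (c := Cdiv (g k) (v k)).
    destruct (IH (subS g (scaleS c v))) as [h' [Mh' Sh']].
    { apply cs_sub; auto. apply Msc. apply MS; auto. }
    { intros q Hq. unfold subS, scaleS. destruct (Nat.eq_dec q k).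
      subst q. unfold c. field. auto.
      rewrite Zg, Zv by lia. ring. }
    exists (addS h' (scaleS c e)). split. apply Madd; auto.
    rewrite (S_add n F), (S_scale n F); auto using H2_scale. rewrite Sh'. fold v.
    apply functional_extensionality; intros q. unfold addS, subS, scaleS. ring. }
  assert (Call : forall t k, (S N <= k + t)%nat -> (m0 < k)%nat -> forall g, M g -> Zo k g -> exists h, M h /\ Sop F h = g).
  { induction t; intros k Hkt Hk g Mg Zg.
    - apply CN; auto. intros q Hq; apply Zg; lia.
    - destruct (Compare_dec.le_lt_dec (S N) (k + t)). apply (IHt k); auto.
      apply (Cstep k Hk). intros g' Mg' Zg'. apply (IHt (S k)); auto. lia. auto. auto. }
  assert (Key : forall g, M g -> g m0 = RtoC 0 -> exists h, M h /\ Sop F h = g).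
  { intros g Mg g0. apply (Call (S N) (S m0)); [lia|lia|exact Mg|].
    intros q Hq. destruct (Nat.eq_dec q m0). subst; auto. apply (Zm0 g Mg). lia. }
  destruct (E1 0%nat) as [e0 [Me0 [_ e00]]]. rewrite Nat.add_0_r in e00.
  set (N1 := fun a => M a /\ a m0 = RtoC 0).
  assert (HN1 : closed_subspace N1) by (apply cs_coord; auto).
  destruct (projection N1 e0 (cs_rcs N1 HN1) (MH e0 Me0)) as [p0 [[Mp0 p0m] Op0]].
  set (f := subS e0 p0).
  assert (Mf : M f) by (apply cs_sub; auto).
  assert (fm : f m0 = RtoC 1).
  { unfold f, subS. rewrite e00, p0m. unfold RtoC. apply injective_projections; simpl; ring. }
  assert (SN1 : forall w, M w -> N1 (Sop F w)).
  { intros w Mw. split. apply MS; auto. apply (S_low n F m0 w); auto. }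
  assert (Wf : wandering (opadd Mz F) M f).
  { split; auto. intros w Mw. apply orth_iff. rewrite Sop_eq. split.
    apply Op0, SN1; auto. apply Op0. apply cs_iS; auto. }
  exists f. split; auto. split.
  { intros Hf. assert (H := f_equal (fun v => v m0) Hf). simpl in H. rewrite fm in H. apply C10. exact H. }
  intros u [Mu Ou]. exists (u m0).
  set (v := subS u (scaleS (u m0) f)).
  assert (Mv : M v) by (apply cs_sub; auto).
  assert (vm : v m0 = RtoC 0) by (unfold v, subS, scaleS; rewrite fm; ring).
  destruct (Key v Mv vm) as [h [Mh Sh]].
  assert (Hu2 : H2 u) by auto. assert (Hf2 : H2 f) by auto. assert (HS2 : H2 (Sop F h)) by (apply (H2_S n); auto).
  destruct (proj1 (orth_iff _ _) (Ou h Mh)) as [O1 O2]. rewrite Sop_eq in O1, O2.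
  assert (Q1 : rip f (Sop F h) = 0) by (apply Op0, SN1; auto).
  assert (Q2 : rip f (iS (Sop F h)) = 0) by (apply Op0, cs_iS, SN1; auto).
  assert (Hv0 : nsq v <= 0).
  { rewrite <- rip_self. assert (E : rip v v = rip v (Sop F h)) by (rewrite Sh; auto). rewrite E. unfold v.
    rewrite rip_sub_l, rip_scale_l, rip_iS, O1, Q1, Q2; auto using H2_scale. lra. }
  assert (Hvz : v = zeroC) by (apply nsq_zero; auto; apply MH; auto).
  apply functional_extensionality; intros k.
  assert (H := f_equal (fun w => w k) Hvz). simpl in H. unfold v, subS, scaleS, zeroC in H.
  assert (E : u k = Cplus (Cminus (u k) (Cmult (u m0) (f k))) (Cmult (u m0) (f k))) by ring.
  unfold scaleS. rewrite E, H. ring.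
Qed.
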